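(* Let $\{x^k\}$ be generated by the ABP algorithm described in the context, and assume (A1)–(A7): (A1) $\mathcal F$ is continuously differentiable; (A2) $C$, $Q$ nonempty closed convex, $z_i^*>-\infty$ for each $i$; (A3) each $f_i$ convex; (A4) $\Omega\ne\emptyset$; (A5) $\lambda_k>0$, $\sum\lambda_k=\infty$, $\sum\lambda_k^2<\infty$; (A6) $0<\underline\alpha\le\alpha_k\le\bar\alpha$, $0<\underline\beta\le\beta_k\le\bar\beta$, $0<\underline\gamma\le\gamma_k\le\bar\gamma$ for all $k$; (A7) $\varphi_{\mathrm{lb}}=\varphi^*$. Then there exist a subsequence $\{k_j\}$ and a point $x^\infty\in\Omega$ with $x^{k_j}\to x^\infty$.
   Context: Let $n,m\ge1$, $\mathcal F=(f_1,\dots,f_m)\colon\mathbb R^n\to\mathbb R^m$, $C\subset\mathbb R^n$, $Q\subset\mathbb R^m$, $Q^+:=Q-\mathbb R^m_+=\{y-u:y\in Q,u\in\mathbb R^m_+\}$; $P_S$ is Euclidean projection onto a nonempty closed convex set $S$. Let $z_i^*:=\inf_{x\in C}f_i(x)$, fix $r$ with $r_i>0$, $\sum r_i=1$. Define $\varphi(x):=\max_ir_i(f_i(x)-z_i^* )$, $H(x):=\tfrac12\mathrm{dist}^2(x,C)$, $G(x):=\tfrac12\mathrm{dist}^2(\mathcal F(x),Q^+)$, $\mathcal S:=\{x:H(x)=0,G(x)=0\}$, $\varphi^*:=\inf_{\mathcal S}\varphi$, $\Omega:=\{x\in\mathcal S:\varphi(x)=\varphi^*\}$, $\varphi_{\mathrm{lb}}:=\inf_C\varphi$.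 ABP algorithm: given $x^0$, $\mu>0$, positive sequences $\{\alpha_k\},\{\beta_k\},\{\gamma_k\},\{\lambda_k\}$: $p^k:=P_{Q^+}(\mathcal F(x^k))$, $\rho^k:=\mathcal F(x^k)-p^k$, $z^k:=x^k-P_C(x^k)$, $v^k:=J_{\mathcal F}(x^k)^T\rho^k$, $w^k:=r_{i^*}\nabla f_{i^*}(x^k)$ with arbitrary $i^*\in\arg\max_ir_i(f_i(x^k)-z_i^* )$, $\Delta_k:=\varphi(x^k)-\varphi_{\mathrm{lb}}$, $d^k:=\alpha_k\mathbf 1_{\{\Delta_k\ge0\}}w^k+\beta_kz^k+\gamma_kv^k$, $\eta_k:=\max(\mu,\|d^k\|)$, $x^{k+1}:=x^k-(\lambda_k/\eta_k)d^k$. *)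

(* Defs.v *)
From HB Require Import structures.
From mathcomp Require Import all_boot all_order all_algebra.
From mathcomp Require Import all_classical all_reals all_analysis.
Set Implicit Arguments. Unset Strict Implicit. Unset Printing Implicit Defensive.
Import Order.TTheory GRing.Theory Num.Theory.
Import numFieldNormedType.Exports.
Local Open Scope classical_set_scope.
Local Open Scope ring_scope.

Section Defs.
Variable R : realType.

Definition enorm n (v : 'rV[R]_n) : R := Num.sqrt (\sum_(j < n) (v 0 j) ^+ 2).

Definition edist n (x : 'rV[R]_n) (S : set 'rV[R]_n) : R :=
  inf [set enorm (x - y) | y in S].

Definition is_proj n (S : set 'rV[R]_n) (x p : 'rV[R]_n) : Prop :=
  S p /\ forall y, S y -> enorm (x - p) <= enorm (x - y).

Definition ebasis n (j : 'I_n) : 'rV[R]_n := delta_mx 0 j.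

Definition grad n (f : 'rV[R]_n -> R) (x : 'rV[R]_n) : 'rV[R]_n :=
  \row_(j < n) ('D_(ebasis j) f x).

Definition C1 n (f : 'rV[R]_n -> R) : Prop :=
  (forall x, differentiable f x) /\
  (forall j : 'I_n, continuous (fun x => 'D_(ebasis j) f x)).

Definition Qplus m (Q : set 'rV[R]_m) : set 'rV[R]_m :=
  [set z | exists y (u : 'rV[R]_m), Q y /\ (forall i, 0 <= u 0 i) /\ z = y - u].

Definition Fvec n m (f : 'I_m -> 'rV[R]_n -> R) (x : 'rV[R]_n) : 'rV[R]_m :=
  \row_(i < m) f i x.

Definition zstar n m (f : 'I_m -> 'rV[R]_n -> R) (C : set 'rV[R]_n) (i : 'I_m) : R :=
  inf [set f i x | x in C].

(* phi(x) = max_i r_i (f_i(x) - z_i^* )  (m+1 >= 1 objectives) *)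
Definition phi n m (f : 'I_m.+1 -> 'rV[R]_n -> R) (r : 'I_m.+1 -> R)
  (C : set 'rV[R]_n) (x : 'rV[R]_n) : R :=
  \big[Num.max/ r ord0 * (f ord0 x - zstar f C ord0)]_(i < m.+1)
     (r i * (f i x - zstar f C i)).

Definition Hfun n (C : set 'rV[R]_n) (x : 'rV[R]_n) : R := (edist x C) ^+ 2 / 2.

Definition Gfun n m (f : 'I_m -> 'rV[R]_n -> R) (Q : set 'rV[R]_m) (x : 'rV[R]_n) : R :=
  (edist (Fvec f x) (Qplus Q)) ^+ 2 / 2.

Definition feas n m (f : 'I_m -> 'rV[R]_n -> R) (C : set 'rV[R]_n)
  (Q : set 'rV[R]_m) : set 'rV[R]_n :=
  [set x | Hfun C x = 0 /\ Gfun f Q x = 0].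

Definition phistar n m (f : 'I_m.+1 -> 'rV[R]_n -> R) r C Q : R :=
  inf [set phi f r C x | x in feas f C Q].

Definition Omega n m (f : 'I_m.+1 -> 'rV[R]_n -> R) r C Q : set 'rV[R]_n :=
  [set x | feas f C Q x /\ phi f r C x = phistar f r C Q].

Definition philb n m (f : 'I_m.+1 -> 'rV[R]_n -> R) r C : R :=
  inf [set phi f r C x | x in C].

(* ABP iteration: all data of step k, including the (arbitrary) choice of
   index istar k in the argmax, and the projections pQ k = P_{Q^+}(F(x^k)),
   pC k = P_C(x^k). *)
Definition ABP_seq n m (f : 'I_m.+1 -> 'rV[R]_n -> R) (r : 'I_m.+1 -> R)
  (C : set 'rV[R]_n) (Q : set 'rV[R]_m.+1) (mu : R)
  (alpha beta gamma lam : nat -> R)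
  (x : nat -> 'rV[R]_n) (istar : nat -> 'I_m.+1)
  (pQ : nat -> 'rV[R]_m.+1) (pC : nat -> 'rV[R]_n) : Prop :=
  forall k,
    is_proj (Qplus Q) (Fvec f (x k)) (pQ k) /\
    is_proj C (x k) (pC k) /\
    (forall i, r i * (f i (x k) - zstar f C i)
               <= r (istar k) * (f (istar k) (x k) - zstar f C (istar k))) /\
    let rho := Fvec f (x k) - pQ k in
    let z := x k - pC k in
    let v := \sum_(i < m.+1) rho 0 i *: grad (f i) (x k) in
    let w := r (istar k) *: grad (f (istar k)) (x k) in
    let Delta := phi f r C (x k) - philb f r C in
    let d := (alpha k * (if 0 <= Delta then 1 else 0)) *: w
             + beta k *: z + gamma k *: v in
    let eta := Num.max mu (enorm d) in
    x k.+1 = x k - (lam k / eta) *: d.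

End Defs.

(* Main.v *)
Require Import Defs.
From HB Require Import structures.
From mathcomp Require Import all_boot all_order all_algebra.
From mathcomp Require Import all_classical all_reals all_analysis.
From mathcomp Require Import ring lra.
Set Implicit Arguments. Unset Strict Implicit. Unset Printing Implicit Defensive.
Import Order.TTheory GRing.Theory Num.Theory.
Import numFieldNormedType.Exports.
Local Open Scope classical_set_scope.
Local Open Scope ring_scope.
Local Notation edist := Defs.edist.


Section Lin.
Variable R : realType.
Variable n : nat.
Implicit Types u v w : 'rV[R]_n.

Definition dot u v : R := \sum_(j < n) u 0 j * v 0 j.

Lemma dotC u v : dot u v = dot v u.
Proof. by apply: eq_bigr => j _; rewrite mulrC. Qed.

Lemma dotDl u v w : dot (u + v) w = dot u w + dot v w.
Proof. by rewrite /dot -big_split; apply: eq_bigr => j _; rewrite mxE mulrDl. Qed.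

Lemma dotNl u w : dot (- u) w = - dot u w.
Proof. by rewrite /dot -sumrN; apply: eq_bigr => j _; rewrite mxE mulNr. Qed.

Lemma dotBl u v w : dot (u - v) w = dot u w - dot v w.
Proof. by rewrite dotDl dotNl. Qed.

Lemma dotZl a u w : dot (a *: u) w = a * dot u w.
Proof. by rewrite /dot mulr_sumr; apply: eq_bigr => j _; rewrite mxE mulrA. Qed.

Lemma dotDr u v w : dot w (u + v) = dot w u + dot w v.
Proof. by rewrite dotC dotDl !(dotC w). Qed.
Lemma dotBr u v w : dot w (u - v) = dot w u - dot w v.
Proof. by rewrite dotC dotBl !(dotC w). Qed.
Lemma dotZr a u w : dot w (a *: u) = a * dot w u.
Proof. by rewrite dotC dotZl dotC. Qed.

Lemma dot_suml (I : Type) (r : seq I) (P : pred I) (F : I -> 'rV[R]_n) w :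
  dot (\sum_(i <- r | P i) F i) w = \sum_(i <- r | P i) dot (F i) w.
Proof.
elim/big_rec2: _ => [|i y1 y2 _ <-]; last by rewrite dotDl.
by rewrite /dot big1 // => j _; rewrite mxE mul0r.
Qed.

Lemma dot_ge0 u : 0 <= dot u u.
Proof. by apply: sumr_ge0 => j _; rewrite -expr2 sqr_ge0. Qed.

Lemma enorm_ge0 u : 0 <= enorm u.
Proof. exact: sqrtr_ge0. Qed.

Lemma enorm_sq u : enorm u ^+ 2 = dot u u.
Proof.
rewrite /enorm sqr_sqrtr; last by apply: sumr_ge0 => j _; rewrite sqr_ge0.
by apply: eq_bigr => j _; rewrite expr2.
Qed.

Lemma enorm_def u : enorm u = Num.sqrt (dot u u).
Proof. by rewrite /enorm /dot; congr Num.sqrt; apply: eq_bigr => j _; rewrite expr2. Qed.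

Lemma enorm_le u v : (enorm u <= enorm v) = (dot u u <= dot v v).
Proof. by rewrite !enorm_def ler_sqrt // dot_ge0. Qed.

Lemma sqB u v : dot (u - v) (u - v) = dot u u - 2 * dot u v + dot v v.
Proof. by rewrite dotBl !dotBr (dotC v u); lra. Qed.

Lemma coord_le u j : `|u 0 j| <= enorm u.
Proof.
rewrite -sqrtr_sqr enorm_def ler_sqrt ?dot_ge0 // /dot.
rewrite (bigD1 j) //= -expr2 lerDl; apply: sumr_ge0 => i _; by rewrite -expr2 sqr_ge0.
Qed.

Lemma dot_le_abs u v : dot u v <= (\sum_(j < n) `|u 0 j|) * enorm v.
Proof.
rewrite /dot mulr_suml; apply: ler_sum => j _.
apply: le_trans (ler_norm _) _; rewrite normrM; apply: ler_wpM2l => //.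
exact: coord_le.
Qed.

Lemma mxnorm_le u : `|u| <= enorm u.
Proof.
rewrite [leLHS]/Num.Def.normr /= mx_normrE; apply: bigmax_le; first exact: enorm_ge0.
move=> -[i j] _ /=.
by rewrite (ord1 i); exact: coord_le.
Qed.

Lemma coord_le_mx u j : `|u 0 j| <= `|u|.
Proof.
rewrite [leRHS]/Num.Def.normr /= mx_normrE.
by apply: le_trans (le_bigmax _ _ (0, j)).
Qed.

Lemma enorm_le_mx u : enorm u <= n%:R * `|u|.
Proof.
rewrite -[leRHS]ger0_norm ?mulr_ge0 // -sqrtr_sqr enorm_def ler_sqrt ?sqr_ge0 //.
apply: le_trans (_ : \sum_(j < n) `|u| ^+ 2 <= _).
  apply: ler_sum => j _; rewrite -expr2 -real_normK ?num_real //.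
  by rewrite lerXn2r ?nnegrE // coord_le_mx.
rewrite sumr_const card_ord exprMn -[_ *+ n]mulr_natl; apply: ler_wpM2r; first exact: sqr_ge0.
rewrite -natrX ler_nat; case: (n) => // k.
by rewrite expnS leq_pmulr.
Qed.

End Lin.


Section Grad.
Variable R : realType.
Variable n : nat.

Lemma grad_dot (f : 'rV[R]_n -> R) x v : differentiable f x ->
  dot (grad f x) v = 'D_v f x.
Proof.
move=> df; rewrite deriveE // {2}(row_sum_delta v) linear_sum /dot.
apply: eq_bigr => j _; rewrite linearZ /= mxE -deriveE // mulrC.
done.
Qed.

Lemma conv_grad_ineq (f : 'rV[R]_n -> R) x y :
  convex_function setT f -> differentiable f x ->
  f x + dot (grad f x) (y - x) <= f y.
Proof.
move=> cf df; rewrite grad_dot //.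
set v := y - x.
pose q := fun h : R => h^-1 *: ((f \o shift x) (h *: v) - f x).
have cq : q @ 0^' --> 'D_v f x.
  have := @diff_derivable _ _ _ _ _ v df; rewrite /derivable => H.
  exact: H.
have cq' : q @ 0^'+ --> 'D_v f x.
  exact: cvg_dnbhs_at_right.
have -> : 'D_v f x = lim (q @ 0^'+) by rewrite (cvg_lim _ cq').
rewrite -lerBrDl; apply: limr_le; first by apply/cvg_ex; exists ('D_v f x).
near=> h.
have h0 : 0 < h by near: h; exact: nbhs_right_gt.
have h1 : h <= 1 by near: h; exact: nbhs_right_le.
have := cf (Itv01 (ltW h0) h1) y x (in_setT _) (in_setT _).
rewrite /q /=.
move=> H.
have E1 : conv (Itv01 (ltW h0) h1) (y : convex_lmodType 'rV[R]_n) x = h *: y + (1 - h) *: x :> 'rV[R]_n by [].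
have E2 : conv (Itv01 (ltW h0) h1) (f y : R^o) (f x) = h * f y + (1 - h) * f x by [].
rewrite E1 E2 in H.
have -> : h *: v + x = h *: y + (1 - h) *: x.
  by rewrite /v scalerBr scalerBl scale1r -addrA [- _ + _]addrC.
change (h^-1 * (f (h *: y + (1 - h) *: x) - f x) <= f y - f x).
rewrite ler_pdivrMl //; lra.
Unshelve. all: by end_near.
Qed.
End Grad.


Section Proj.
Variable R : realType.
Variable n : nat.
Implicit Types (S : set 'rV[R]_n) (x y p q : 'rV[R]_n).

Lemma ed_lb x S : has_lbound [set enorm (x - y) | y in S].
Proof. by exists 0 => _ [y _ <-]; exact: enorm_ge0. Qed.

Lemma ed_ge0 x S : S !=set0 -> 0 <= edist x S.
Proof.
move=> [s Ss]; apply: lb_le_inf; first by exists (enorm (x - s)), s.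
by move=> _ [y _ <-]; exact: enorm_ge0.
Qed.

Lemma ed_le x S s : S s -> edist x S <= enorm (x - s).
Proof. by move=> Ss; apply: ge_inf; [exact: ed_lb | exists s]. Qed.

Lemma ed_approx x S e : S !=set0 -> 0 < e ->
  exists2 s, S s & enorm (x - s) < edist x S + e.
Proof.
move=> [s0 Ss0] e0.
have [_ [s Ss <-] H] := @inf_adherent R [set enorm (x - y) | y in S] e e0
  (conj (ex_intro _ (enorm (x - s0)) (ex_intro2 _ _ s0 Ss0 erefl)) (ed_lb x S)).
by exists s.
Qed.

Lemma le0_of_small (a K : R) : 0 <= K -> (forall e, 0 < e -> a <= K * e) -> a <= 0.
Proof.
move=> K0 H; rewrite leNgt; apply/negP => a0.
have := H (a / (K + 1)) (divr_gt0 a0 (ltr_pwDr ltr01 K0)).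
rewrite mulrA ler_pdivlMr ?(ltr_pwDr ltr01 K0) //; nra.
Qed.

Lemma proj_ineq S x p q : convex_set S -> is_proj S x p -> S q ->
  dot (x - p) (q - p) <= 0.
Proof.
move=> cS [Sp Hp] Sq.
set a := x - p; set b := q - p.
have key : forall t, 0 < t -> t <= 1 -> 2 * t * dot a b <= t ^+ 2 * dot b b.
  move=> t t0 t1.
  have St : S (t *: q + (1 - t) *: p).
    have := cS q p (Itv01 (ltW t0) t1) (mem_set Sq) (mem_set Sp).
    by move/set_mem.
  have := Hp _ St; rewrite enorm_le.
  have -> : x - (t *: q + (1 - t) *: p) = a - t *: b.
    by apply/rowP => j; rewrite /a /b !mxE; ring.
  rewrite (sqB a (t *: b)) !dotZr dotZl; lra.
rewrite leNgt; apply/negP => d0.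
have s0 := dot_ge0 b.
set d := dot a b in key d0; set s := dot b b in key s0.
have ds0 : 0 < d + s + 1 by lra.
set t := d / (d + s + 1).
have t0 : 0 < t by apply: divr_gt0.
have t1 : t <= 1 by rewrite /t ler_pdivrMr // mul1r; lra.
have ht : t * (d + s + 1) = d by rewrite /t divfK // gt_eqF.
have k := key t t0 t1.
have h2 : 2 * d <= t * s.
  rewrite -(ler_pM2l t0); move: k; rewrite expr2; nra.
have h3 : 0 <= t * d by apply: mulr_ge0; lra.
have h4 : 0 <= t * s by apply: mulr_ge0; lra.
rewrite !mulrDr mulr1 in ht; lra.
Qed.

Lemma proj_ineq_cl S x p y : convex_set S -> is_proj S x p -> edist y S = 0 ->
  dot (x - p) (y - p) <= 0.
Proof.
move=> cS [Sp Hp] ey.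
apply: (@le0_of_small _ (\sum_(j < n) `|(x - p) 0 j|)); first by apply: sumr_ge0.
move=> e e0.
have [s Ss] := ed_approx y (ex_intro _ p Sp) e0; rewrite ey add0r => se.
have -> : y - p = (s - p) + (y - s) by apply/rowP => j; rewrite !mxE; ring.
rewrite dotDr.
have h1 := proj_ineq cS (conj Sp Hp) Ss.
have h2 := dot_le_abs (x - p) (y - s).
have : (\sum_(j < n) `|(x - p) 0 j|) * enorm (y - s) <= (\sum_(j < n) `|(x - p) 0 j|) * e.
  by apply: ler_wpM2l; [apply: sumr_ge0 | apply: ltW].
lra.
Qed.

End Proj.


Section QP.
Variable R : realType.
Variable m : nat.
Implicit Types (Q : set 'rV[R]_m) (y p : 'rV[R]_m).

Lemma dot_e y (i : 'I_m) : dot y (delta_mx 0 i) = y 0 i.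
Proof.
rewrite /dot (bigD1 i) //= big1 ?addr0; first by rewrite mxE !eqxx mulr1.
by move=> j ji; rewrite mxE (negbTE ji) andbF mulr0.
Qed.

Lemma dot_ee (i : 'I_m) : dot (delta_mx 0 i : 'rV[R]_m) (delta_mx 0 i) = 1.
Proof. by rewrite dot_e mxE !eqxx. Qed.

Lemma rho_ge0 Q y p : is_proj (Qplus Q) y p -> forall i, 0 <= (y - p) 0 i.
Proof.
move=> [[y0 [u [Qy0 [u0 ->]]]] Hp] i.
set a := y - (y0 - u).
rewrite leNgt; apply/negP => ai.
set t := - a 0 i.
have : Qplus Q (y0 - (u + t *: delta_mx 0 i)).
  exists y0, (u + t *: delta_mx 0 i); split => //; split => // j.
  rewrite !mxE; apply: addr_ge0 => //; apply: mulr_ge0; first by rewrite /t; lra.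
  by case: (_ && _).
move/Hp; rewrite enorm_le.
have -> : y - (y0 - (u + t *: delta_mx 0 i)) = a + t *: delta_mx 0 i.
  by apply/rowP => j; rewrite /a !mxE; ring.
rewrite -/a; clearbody a.
rewrite dotDl !dotDr !dotZr !dotZl dot_ee (dotC (delta_mx _ _)) dot_e /t.
nra.
Qed.

Lemma Qplus_convex Q : convex_set Q -> convex_set (Qplus Q).
Proof.
move=> cQ x z t /set_mem [y1 [u1 [Q1 [u10 ->]]]] /set_mem [y2 [u2 [Q2 [u20 ->]]]].
apply: mem_set.
have := cQ y1 y2 t (mem_set Q1) (mem_set Q2) => /set_mem Qc.
exists (conv t (y1 : convex_lmodType 'rV[R]_m) y2), (t%:num *: u1 + (1 - t%:num) *: u2).
split => //; split.
  move=> j; rewrite !mxE; apply: addr_ge0; apply: mulr_ge0 => //.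
change ((t%:num *: (y1 - u1) + (1 - t%:num) *: (y2 - u2)) =
  (t%:num *: y1 + (1 - t%:num) *: y2) - (t%:num *: u1 + (1 - t%:num) *: u2)).
by apply/rowP => j; rewrite !mxE; ring.
Qed.

Lemma Qplus_n0 Q : Q !=set0 -> Qplus Q !=set0.
Proof.
move=> [y Qy]; exists y, y, 0; split => //; split; last by rewrite subr0.
by move=> i; rewrite mxE.
Qed.

End QP.


Section Phi.
Variable R : realType.
Variables n m : nat.
Variable f : 'I_m.+1 -> 'rV[R]_n -> R.
Variable r : 'I_m.+1 -> R.
Variable C : set 'rV[R]_n.

Definition term i x := r i * (f i x - zstar f C i).

Lemma phi_ge x i : term i x <= phi f r C x.
Proof. exact: (le_bigmax _ (fun i => term i x) i). Qed.

Lemma phi_le x c : (forall i, term i x <= c) -> phi f r C x <= c.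
Proof. by move=> H; apply: bigmax_le => [|i _]; [apply: (H ord0) | apply: H]. Qed.

Lemma phi_eq x j : (forall i, term i x <= term j x) -> phi f r C x = term j x.
Proof. by move=> H; apply/eqP; rewrite eq_le phi_le // phi_ge. Qed.

End Phi.

Section Cl.
Variable R : realType.
Variable n : nat.

Lemma edist0_closure (C : set 'rV[R]_n) x : C !=set0 -> edist x C = 0 -> closure C x.
Proof.
move=> C0 e0 B /nbhs_ballP [e /= e_gt0 HB].
have [c Cc] := ed_approx x C0 e_gt0; rewrite e0 add0r => hc.
exists c; split => //; apply: HB; rewrite -ball_normE /=.
by apply: le_lt_trans (mxnorm_le _) hc.
Qed.

Lemma Hfun0 (C : set 'rV[R]_n) x : Hfun C x = 0 -> edist x C = 0.
Proof. by rewrite /Hfun => /eqP; rewrite mulf_eq0 invr_eq0 pnatr_eq0 /= orbF sqrf_eq0 => /eqP. Qed.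

Lemma Gfun0 m (f : 'I_m -> 'rV[R]_n -> R) Q x : Gfun f Q x = 0 -> edist (Fvec f x) (Qplus Q) = 0.
Proof. by rewrite /Gfun => /eqP; rewrite mulf_eq0 invr_eq0 pnatr_eq0 /= orbF sqrf_eq0 => /eqP. Qed.

Lemma Hfun0' (C : set 'rV[R]_n) x : edist x C = 0 -> Hfun C x = 0.
Proof. by rewrite /Hfun => ->; rewrite expr0n mul0r. Qed.

Lemma Gfun0' m (f : 'I_m -> 'rV[R]_n -> R) Q x : edist (Fvec f x) (Qplus Q) = 0 -> Gfun f Q x = 0.
Proof. by rewrite /Gfun => ->; rewrite expr0n mul0r. Qed.

End Cl.


Lemma extract (P : nat -> nat -> Prop) :
  (forall j K, exists k, (K <= k)%N /\ P j k) ->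
  exists s : nat -> nat, (forall j, (s j < s j.+1)%N) /\ forall j, P j (s j).
Proof.
move=> H.
have [ch Hch] := choice (fun jK : nat * nat => H jK.1 jK.2).
pose s := fix s j := match j with 0 => ch (0, 0)%N | j'.+1 => ch (j'.+1, (s j').+1) end.
exists s; split => [j|[|j]] /=.
- by have [+ _] := Hch (j.+1, (s j).+1).
- by have [_ +] := Hch (0, 0)%N.
- by have [_ +] := Hch (j.+1, (s j).+1).
Qed.

Lemma incr_lt (s : nat -> nat) : (forall j, (s j < s j.+1)%N) ->
  forall i k, (i < k)%N -> (s i < s k)%N.
Proof.
move=> Hs i; elim=> // k IH; rewrite ltnS leq_eqVlt => /orP [/eqP ->|/IH h] //.
exact: ltn_trans h (Hs k).
Qed.

Lemma incr_ge (s : nat -> nat) : (forall j, (s j < s j.+1)%N) -> forall j, (j <= s j)%N.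
Proof. by move=> Hs; elim=> // j IH; apply: leq_ltn_trans IH (Hs j). Qed.

Section SeqR.
Variable R : realType.

Lemma inv_small (e : R) : 0 < e -> exists N, forall j, (N <= j)%N -> j.+1%:R^-1 < e.
Proof.
move=> e0; have [N _ HN] := near_infty_natSinv_lt (PosNum e0).
exists N => j Nj; exact: HN.
Qed.

Lemma cvg_from_inv (n : nat) (y : nat -> 'rV[R]_n) p :
  (forall j, `|p - y j| < j.+1%:R^-1) -> y @ \oo --> p.
Proof.
move=> H; apply/cvgrPdist_lt => e e0.
have [N HN] := inv_small e0; exists N => // j /= Nj.
by apply: lt_trans (H j) (HN j Nj).
Qed.

Lemma seq_cluster (n : nat) (y : nat -> 'rV[R]_n) (A : set 'rV[R]_n) :
  compact A -> (forall k, A (y k)) ->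
  exists p, A p /\ forall e K, 0 < e -> exists k, (K <= k)%N /\ `|p - y k| < e.
Proof.
move=> cA Ay.
have [|p [Ap clp]] := cA (y @ \oo) _.
  by exists 0%N => // k _; apply: Ay.
exists p; split => // e K e0.
have [z [[k /= Kk <-] yk]] := clp [set y k | k in [set k | (K <= k)%N]] (ball p e)
   (ex_intro2 _ _ K I (fun k Kk => ex_intro2 _ _ k Kk erefl)) (nbhsx_ballx p e e0).
by exists k; split => //; move: yk; rewrite -ball_normE.
Qed.

End SeqR.


Section Bnd.
Variable R : realType.

Lemma cont_bound n (g : 'rV[R]_n -> R) (K : set 'rV[R]_n) :
  compact K -> continuous g -> exists M, forall x, K x -> `|g x| <= M.
Proof.
move=> cK cg.
have := compact_bounded (continuous_compact (continuous_subspaceT cg) cK).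
move=> [M [Mreal HM]].
exists (M + 1) => x Kx.
have := HM (M + 1); rewrite ltrDl ltr01 => /(_ isT) H.
by apply: (H (g x)); exists x.
Qed.

Lemma finite_bound (I : finType) (P : I -> R -> Prop) :
  (forall i M M', M <= M' -> P i M -> P i M') -> (forall i, exists M, P i M) ->
  exists M, forall i, P i M.
Proof.
move=> mono H; have [Mi HM] := choice H.
exists (\sum_i `|Mi i|) => i; apply: mono (HM i).
apply: le_trans (ler_norm _) _.
by rewrite (bigD1 i) //= lerDl; apply: sumr_ge0.
Qed.

Lemma liminf_small (lam s g : nat -> R) (E B : R) :
  (forall k, 0 < lam k) -> 0 < E -> (forall k, lam k / E <= s k) ->
  (forall k, 0 <= g k) -> (forall N, \sum_(0 <= k < N) s k * g k <= B) ->
  series lam @ \oo --> +oo ->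
  forall e K, 0 < e -> exists k, (K <= k)%N /\ g k < e.
Proof.
move=> lam0 E0 sE g0 SB lamoo e K e0.
apply: contrapT => nex.
have ge : forall k, (K <= k)%N -> e <= g k.
  move=> k Kk; rewrite leNgt; apply/negP => gk; apply: nex; exists k; split => //.
have bnd : forall N, (K <= N)%N -> series lam N <= series lam K + B * E / e.
  move=> N KN; rewrite /series /= (big_cat_nat _ KN) //= lerD2l.
  have -> : B * E / e = B / (e / E) by field; apply/andP; split; rewrite gt_eqF.
  rewrite ler_pdivlMr ?divr_gt0 // mulr_suml.
  apply: le_trans (SB N).
  apply: le_trans (_ : \sum_(K <= k < N) s k * g k <= _).
    rewrite big_nat_cond [X in _ <= X]big_nat_cond; apply: ler_sum => k /andP [/andP [Kk _] _].
    have -> : lam k * (e / E) = (lam k / E) * e by rewrite [e / E]mulrC mulrA.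
    apply: ler_pM => //.
    - by apply: divr_ge0; apply: ltW.
    - exact: ltW.
    - exact: ge.
  rewrite [X in _ <= X](@big_cat_nat _ _ _ K) //= lerDr.
  apply: sumr_ge0 => k _; apply: mulr_ge0 => //.
  by apply: le_trans (sE k); apply: divr_ge0; apply: ltW.
move/cvgryPge: lamoo => /(_ (series lam K + B * E / e + 1)) [N0 _ HN].
have := HN (maxn N0 K) (leq_maxl _ _).
have := bnd (maxn N0 K) (leq_maxr _ _).
lra.
Qed.

End Bnd.


Section Main.
Variables (R : realType) (n m : nat) (f : 'I_m.+1 -> 'rV[R]_n.+1 -> R) (r : 'I_m.+1 -> R)
  (C : set 'rV[R]_n.+1) (Q : set 'rV[R]_m.+1) (mu : R)
  (alpha beta gamma lam : nat -> R) (alo ahi blo bhi glo ghi : R)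
  (x : nat -> 'rV[R]_n.+1) (istar : nat -> 'I_m.+1)
  (pQ : nat -> 'rV[R]_m.+1) (pC : nat -> 'rV[R]_n.+1).
Hypotheses (r0 : forall i, 0 < r i) (mu0 : 0 < mu)
  (Habp : ABP_seq f r C Q mu alpha beta gamma lam x istar pQ pC)
  (HC1 : forall i, C1 (f i)) (C0 : C !=set0) (Ccl : closed C) (Ccv : convex_set C)
  (Q0 : Q !=set0) (Qcv : convex_set Q)
  (flb : forall i, has_lbound [set f i y | y in C])
  (fcv : forall i, convex_function setT (f i))
  (lam0 : forall k, 0 < lam k) (lamoo : series lam @ \oo --> +oo)
  (lam2 : cvgn (series (fun k => lam k ^+ 2)))
  (alo0 : 0 < alo) (Ha : forall k, alo <= alpha k <= ahi)
  (blo0 : 0 < blo) (Hb : forall k, blo <= beta k <= bhi)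
  (glo0 : 0 < glo) (Hg : forall k, glo <= gamma k <= ghi)
  (A7 : philb f r C = phistar f r C Q).
Variable xs : 'rV[R]_n.+1.
Hypothesis Oxs : Omega f r C Q xs.

Definition rho k := Fvec f (x k) - pQ k.
Definition zz k := x k - pC k.
Definition vv k := \sum_(i < m.+1) rho k 0 i *: grad (f i) (x k).
Definition ww k := r (istar k) *: grad (f (istar k)) (x k).
Definition Dl k := phi f r C (x k) - philb f r C.
Definition dd k := (alpha k * (if 0 <= Dl k then 1 else 0)) *: ww k
             + beta k *: zz k + gamma k *: vv k.
Definition eta k := Num.max mu (enorm (dd k)).
Definition gk k := alo * Num.max (Dl k) 0 + blo * dot (zz k) (zz k) + glo * dot (rho k) (rho k).

Lemma recur k : x k.+1 = x k - (lam k / eta k) *: dd k.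
Proof. by have [_ [_ [_ H]]] := Habp k; exact: H. Qed.
Lemma projQ k : is_proj (Qplus Q) (Fvec f (x k)) (pQ k).
Proof. by have [H _] := Habp k. Qed.
Lemma projC k : is_proj C (x k) (pC k).
Proof. by have [_ [H _]] := Habp k. Qed.
Lemma argmx k i : term f r C i (x k) <= term f r C (istar k) (x k).
Proof. by have [_ [_ [H _]]] := Habp k; exact: H. Qed.

Lemma fdiff i y : differentiable (f i) y.
Proof. exact: (HC1 i).1. Qed.

Lemma xs_C : C xs.
Proof. by case: Oxs => -[H _] _; apply: Ccl; apply: edist0_closure C0 (Hfun0 H). Qed.
Lemma xs_C0 : edist xs C = 0.
Proof. by case: Oxs => -[H _] _; apply: Hfun0. Qed.
Lemma xs_Q : edist (Fvec f xs) (Qplus Q) = 0.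
Proof. by case: Oxs => -[_ H] _; apply: Gfun0. Qed.
Lemma phi_xs : phi f r C xs = philb f r C.
Proof. by case: Oxs => _ ->. Qed.

Lemma dot_z k : dot (zz k) (zz k) <= dot (zz k) (x k - xs).
Proof.
have h := proj_ineq_cl Ccv (projC k) xs_C0.
have -> : x k - xs = zz k - (xs - pC k) by apply/rowP => j; rewrite !mxE; ring.
have {}h : dot (zz k) (xs - pC k) <= 0 := h.
rewrite [dot (zz k) (zz k - _)]dotBr; lra.
Qed.


Lemma grad_ineq i y : f i y - f i xs <= dot (grad (f i) y) (y - xs).
Proof.
have := conv_grad_ineq xs (fcv i) (fdiff i y).
rewrite !dotBr; lra.
Qed.

Lemma dot_v k : dot (rho k) (rho k) <= dot (vv k) (x k - xs).
Proof.
have h := proj_ineq_cl (Qplus_convex Qcv) (projQ k) xs_Q.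
have {}h : dot (rho k) (Fvec f xs - pQ k) <= 0 := h.
have e1 : dot (rho k) (Fvec f (x k) - Fvec f xs) = dot (rho k) (rho k) - dot (rho k) (Fvec f xs - pQ k).
  rewrite -dotBr; congr dot; apply/rowP => j; rewrite /rho !mxE; ring.
suff : dot (rho k) (Fvec f (x k) - Fvec f xs) <= dot (vv k) (x k - xs) by lra.
rewrite /vv dot_suml [X in X <= _]/dot; apply: ler_sum => i _.
rewrite dotZl !mxE; apply: ler_wpM2l.
  by have := rho_ge0 (projQ k) i; rewrite !mxE.
exact: grad_ineq.
Qed.

Lemma dot_w k : 0 <= Dl k -> Dl k <= dot (ww k) (x k - xs).
Proof.
move=> _; rewrite /ww dotZl /Dl.
have h1 := grad_ineq (istar k) (x k).
have h2 : phi f r C (x k) = term f r C (istar k) (x k) by apply: phi_eq => i; exact: argmx.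
have h3 := phi_ge f r C xs (istar k).
rewrite phi_xs in h3; rewrite h2.
have : r (istar k) * (f (istar k) (x k) - f (istar k) xs) <= r (istar k) * dot (grad (f (istar k)) (x k)) (x k - xs).
  by apply: ler_wpM2l => //; apply: ltW.
move: h3; rewrite /term; lra.
Qed.

Lemma gk_ge0 k : 0 <= gk k.
Proof.
have h : 0 <= Num.max (Dl k) 0 by rewrite le_max lexx orbT.
have h1 := mulr_ge0 (ltW alo0) h.
have h2 := mulr_ge0 (ltW blo0) (dot_ge0 (zz k)).
have h3 := mulr_ge0 (ltW glo0) (dot_ge0 (rho k)).
rewrite /gk; lra.
Qed.

Lemma dot_d k : gk k <= dot (dd k) (x k - xs).
Proof.
rewrite /dd !dotDl !dotZl /gk.
have [a1 a2] := andP (Ha k); have [b1 b2] := andP (Hb k); have [g1 g2] := andP (Hg k).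
have hz := dot_z k; have hv := dot_v k.
have z0 := dot_ge0 (zz k); have v0 := dot_ge0 (rho k).
have P2 : blo * dot (zz k) (zz k) <= beta k * dot (zz k) (x k - xs).
  apply: le_trans (ler_wpM2r z0 b1) _; apply: ler_wpM2l; [exact: le_trans (ltW blo0) b1 | done].
have P3 : glo * dot (rho k) (rho k) <= gamma k * dot (vv k) (x k - xs).
  apply: le_trans (ler_wpM2r v0 g1) _; apply: ler_wpM2l; [exact: le_trans (ltW glo0) g1 | done].
suff P1 : alo * Num.max (Dl k) 0 <= alpha k * (if 0 <= Dl k then 1 else 0) *
  (r (istar k) * dot (grad (f (istar k)) (x k)) (x k - xs)) by lra.
case: ifP => D0.
  have := dot_w D0; rewrite /ww dotZl mulr1 (max_idPl D0) => h.
  apply: le_trans (ler_wpM2r D0 a1) _; apply: ler_wpM2l => //.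
  exact: le_trans (ltW alo0) a1.
by rewrite mulr0 mul0r max_r ?mulr0 // ltW // ltNge D0.
Qed.

Lemma eta_ge k : enorm (dd k) <= eta k /\ mu <= eta k.
Proof. by rewrite /eta le_max lexx orbT le_max lexx. Qed.

Lemma eta_gt0 k : 0 < eta k.
Proof. by apply: lt_le_trans mu0 (eta_ge k).2. Qed.

Lemma step k : dot (x k.+1 - xs) (x k.+1 - xs) <=
  dot (x k - xs) (x k - xs) - 2 * (lam k / eta k) * gk k + lam k ^+ 2.
Proof.
set s := lam k / eta k.
have -> : x k.+1 - xs = (x k - xs) - s *: dd k.
  by rewrite recur /s; apply/rowP => j; rewrite !mxE; ring.
rewrite (sqB (x k - xs) (s *: dd k)) !dotZr dotZl (dotC _ (dd k)).
have s0 : 0 <= s by apply: divr_ge0; [apply: ltW | apply: ltW; apply: eta_gt0].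
have hd := dot_d k.
have hs : s * eta k = lam k by rewrite /s divfK // gt_eqF // eta_gt0.
clearbody s.
have he : dot (dd k) (dd k) <= eta k ^+ 2.
  rewrite -enorm_sq; apply: lerXn2r; rewrite ?nnegrE ?enorm_ge0 ?(ltW (eta_gt0 k)) //.
  exact: (eta_ge k).1.
have : s * (s * dot (dd k) (dd k)) <= lam k ^+ 2.
  rewrite -hs mulrA -expr2 exprMn; apply: ler_wpM2l => //; apply: sqr_ge0.
nra.
Qed.


Lemma sum_bound N : dot (x N - xs) (x N - xs) + 2 * \sum_(0 <= k < N) (lam k / eta k) * gk k
   <= dot (x 0 - xs) (x 0 - xs) + \sum_(0 <= k < N) lam k ^+ 2.
Proof.
elim: N => [|N IH]; first by rewrite !big_geq // mulr0 !addr0.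
rewrite !big_nat_recr //=; have := step N; lra.
Qed.

Definition L := limn (series (fun k => lam k ^+ 2)).

Lemma series_le N : \sum_(0 <= k < N) lam k ^+ 2 <= L.
Proof.
have := @nondecreasing_cvgn_le _ (series (fun k => lam k ^+ 2)) _ lam2 N.
apply => //.
move=> a b ab; rewrite /series /=.
by apply: (@nondecreasing_series _ (fun k => lam k ^+ 2) xpredT 0) => // k _ _; apply: sqr_ge0.
Qed.

Definition B := dot (x 0 - xs) (x 0 - xs) + L.

Lemma sg_ge0 k : 0 <= (lam k / eta k) * gk k.
Proof. by apply: mulr_ge0; [apply: divr_ge0; apply: ltW; [ | apply: eta_gt0] | apply: gk_ge0]. Qed.

Lemma dist_bound k : dot (x k - xs) (x k - xs) <= B.
Proof.
have := sum_bound k; have := series_le k.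
have : 0 <= \sum_(0 <= i < k) (lam i / eta i) * gk i by apply: sumr_ge0 => i _; apply: sg_ge0.
rewrite /B; lra.
Qed.

Lemma sum_sg N : \sum_(0 <= k < N) (lam k / eta k) * gk k <= B.
Proof.
have := sum_bound N; have := series_le N; have := dot_ge0 (x N - xs).
have : 0 <= \sum_(0 <= i < N) (lam i / eta i) * gk i by apply: sumr_ge0 => i _; apply: sg_ge0.
rewrite /B; lra.
Qed.


Definition Rad := Num.sqrt B + 1.
Definition Kset := [set v : 'rV[R]_n.+1 | forall i, `[xs 0 i - Rad, xs 0 i + Rad]%classic (v 0 i)].

Lemma Kcompact : compact Kset.
Proof.
have := @rV_compact _ _ (fun i => `[xs 0 i - Rad, xs 0 i + Rad]%classic) (fun i => @segment_compact R _ _).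
by [].
Qed.

Lemma enorm_xk k : enorm (x k - xs) <= Num.sqrt B.
Proof. by rewrite enorm_def ler_sqrt ?dist_bound // (le_trans (dot_ge0 _) (dist_bound k)). Qed.

Lemma xK k : Kset (x k).
Proof.
move=> i /=; rewrite in_itv /=.
have := le_trans (coord_le (x k - xs) i) (enorm_xk k).
rewrite !mxE /Rad ler_norml; lra.
Qed.

Lemma fcont i : continuous (f i).
Proof. by move=> y; apply: differentiable_continuous; apply: fdiff. Qed.

Lemma Mg_ex : exists Mg, forall (ij : 'I_m.+1 * 'I_n.+1) y, Kset y ->
  `|'D_(ebasis R ij.2) (f ij.1) y| <= Mg.
Proof.
apply: (@finite_bound _ _ (fun ij M => forall y, Kset y -> `|'D_(ebasis R ij.2) (f ij.1) y| <= M)).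
  by move=> ij M M' MM' H y Ky; apply: le_trans (H y Ky) MM'.
move=> ij; apply: cont_bound Kcompact _; exact: (HC1 ij.1).2.
Qed.

Lemma Mf_ex : exists Mf, forall (i : 'I_m.+1) y, Kset y -> `|f i y| <= Mf.
Proof.
apply: (@finite_bound _ _ (fun i M => forall y, Kset y -> `|f i y| <= M)).
  by move=> ij M M' MM' H y Ky; apply: le_trans (H y Ky) MM'.
by move=> i; apply: cont_bound Kcompact _; exact: fcont.
Qed.


Definition Mg := sval (cid Mg_ex).
Definition Mf := sval (cid Mf_ex).
Definition q0 := sval (cid (Qplus_n0 Q0)).
Definition Rr := \sum_(i < m.+1) `|r i|.

Lemma Mg_spec i j y : Kset y -> `|'D_(ebasis R j) (f i) y| <= Mg.
Proof. by move=> Ky; have := svalP (cid Mg_ex) (i, j) y Ky. Qed.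
Lemma Mf_spec i y : Kset y -> `|f i y| <= Mf.
Proof. by move=> Ky; have := svalP (cid Mf_ex) i y Ky. Qed.
Lemma q0_spec : Qplus Q q0.
Proof. exact: svalP (cid (Qplus_n0 Q0)). Qed.

Lemma Mg0 : 0 <= Mg.
Proof. exact: le_trans (normr_ge0 _) (Mg_spec ord0 ord0 (xK 0)). Qed.
Lemma Mf0 : 0 <= Mf.
Proof. exact: le_trans (normr_ge0 _) (Mf_spec ord0 (xK 0)). Qed.

Lemma grad_bound i y : Kset y -> `|grad (f i) y| <= Mg.
Proof.
move=> Ky; rewrite [leLHS]/Num.Def.normr /= mx_normrE.
apply: bigmax_le; first exact: Mg0.
by move=> [a b] _ /=; rewrite mxE; apply: Mg_spec.
Qed.

Lemma F_bound y : Kset y -> `|Fvec f y| <= Mf.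
Proof.
move=> Ky; rewrite [leLHS]/Num.Def.normr /= mx_normrE.
apply: bigmax_le; first exact: Mf0.
by move=> [a b] _ /=; rewrite mxE; apply: Mf_spec.
Qed.

Definition Rho := m.+1%:R * (Mf + `|q0|).

Lemma rho_bound k : enorm (rho k) <= Rho.
Proof.
have h1 := (projQ k).2 q0 q0_spec.
apply: le_trans h1 _; apply: le_trans (enorm_le_mx _) _.
rewrite /Rho; apply: ler_wpM2l => //.
apply: le_trans (ler_normB _ _) _; rewrite lerD2r; exact: F_bound (xK k).
Qed.

Lemma zz_bound k : enorm (zz k) <= Num.sqrt B.
Proof. by apply: le_trans ((projC k).2 xs xs_C) _; apply: enorm_xk. Qed.

Lemma r_le i : `|r i| <= Rr.
Proof. by rewrite /Rr (bigD1 i) //= lerDl; apply: sumr_ge0. Qed.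

Definition E := n.+1%:R * (ahi * (Rr * Mg) + bhi * Num.sqrt B + ghi * (m.+1%:R * (Rho * Mg))).

Lemma d_bound k : enorm (dd k) <= E.
Proof.
apply: le_trans (enorm_le_mx _) _; rewrite /E; apply: ler_wpM2l => //.
have [a1 a2] := andP (Ha k); have [b1 b2] := andP (Hb k); have [g1 g2] := andP (Hg k).
have al0 : 0 <= alpha k by apply: le_trans (ltW alo0) a1.
have be0 : 0 <= beta k by apply: le_trans (ltW blo0) b1.
have ga0 : 0 <= gamma k by apply: le_trans (ltW glo0) g1.
rewrite /dd; apply: le_trans (ler_normD _ _) _; apply: lerD.
  apply: le_trans (ler_normD _ _) _; apply: lerD; rewrite normrZ.
    apply: ler_pM => //.
      by case: ifP => _; rewrite ?mulr1 ?mulr0 ?normr0 ?ger0_norm //; apply: le_trans al0 a2.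
    rewrite /ww normrZ; apply: ler_pM => //; first exact: r_le.
    exact: grad_bound (xK k).
  apply: ler_pM => //; first by rewrite ger0_norm.
  exact: le_trans (mxnorm_le _) (zz_bound k).
rewrite normrZ ger0_norm //; apply: ler_pM => //.
rewrite /vv; apply: le_trans (ler_norm_sum _ _ _) _.
apply: le_trans (_ : _ <= \sum_(i < m.+1) Rho * Mg) _; last first.
  by rewrite sumr_const card_ord mulr_natl.
apply: ler_sum => i _; rewrite normrZ; apply: ler_pM => //.
  exact: le_trans (coord_le _ _) (rho_bound k).
exact: grad_bound (xK k).
Qed.


Definition Eta := Num.max mu E.

Lemma eta_le k : eta k <= Eta.
Proof. by rewrite /eta /Eta ge_max le_max lexx /= le_max d_bound orbT. Qed.

Lemma Eta0 : 0 < Eta.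
Proof. by rewrite /Eta lt_max mu0. Qed.

Lemma gk_small e K : 0 < e -> exists k, (K <= k)%N /\ gk k < e.
Proof.
apply: (@liminf_small _ lam (fun k => lam k / eta k) gk Eta B) => //.
- exact: Eta0.
- move=> k; apply: ler_wpM2l; first exact: ltW.
  by rewrite lef_pV2 ?posrE ?Eta0 ?eta_gt0 // eta_le.
- exact: gk_ge0.
- exact: sum_sg.
Qed.

Lemma approx p : (forall e, 0 < e -> exists k, `|p - x k| < e /\ gk k < e) ->
  forall e, 0 < e -> exists k, `|p - x k| < e /\ gk k < e /\ forall i, `|f i p - f i (x k)| < e.
Proof.
move=> H e e0.
have : \forall z \near p, forall i, `|f i p - f i z| < e.
  apply: (@filter_forall _ 'I_m.+1 (fun i z => `|f i p - f i z| < e) (nbhs p) _) => i.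
  have H1 : f i z @[z --> p] --> f i p by apply: fcont.
  by move/cvgrPdist_lt : H1 => /(_ e e0).
move/nbhs_normP => [d /= d0 Hd].
have [k [h1 h2]] := H (Num.min e d) (ltac:(by rewrite lt_min e0 d0)).
exists k; split; first by move: h1; rewrite lt_min => /andP [].
split; first by move: h2; rewrite lt_min => /andP [].
apply: Hd; move: h1; rewrite lt_min => /andP [_]; by rewrite /ball_ /=.
Qed.


Lemma small_enorm (k : nat) (v : 'rV[R]_k) e : 0 <= e -> dot v v <= e ^+ 2 -> enorm v <= e.
Proof. by move=> e0 h; rewrite enorm_def -(ger0_norm e0) -sqrtr_sqr ler_sqrt // sqr_ge0. Qed.

Lemma gk_z k : blo * dot (zz k) (zz k) <= gk k.
Proof.
have h : 0 <= Num.max (Dl k) 0 by rewrite le_max lexx orbT.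
have h1 := mulr_ge0 (ltW alo0) h.
have h3 := mulr_ge0 (ltW glo0) (dot_ge0 (rho k)).
rewrite /gk; lra.
Qed.

Lemma gk_r k : glo * dot (rho k) (rho k) <= gk k.
Proof.
have h : 0 <= Num.max (Dl k) 0 by rewrite le_max lexx orbT.
have h1 := mulr_ge0 (ltW alo0) h.
have h3 := mulr_ge0 (ltW blo0) (dot_ge0 (zz k)).
rewrite /gk; lra.
Qed.

Lemma gk_D k : alo * Dl k <= gk k.
Proof.
have h : Dl k <= Num.max (Dl k) 0 by rewrite le_max lexx.
have h1 := ler_wpM2l (ltW alo0) h.
have h2 := mulr_ge0 (ltW blo0) (dot_ge0 (zz k)).
have h3 := mulr_ge0 (ltW glo0) (dot_ge0 (rho k)).
rewrite /gk; lra.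
Qed.


Lemma omega_limit p : (forall e, 0 < e -> exists k, `|p - x k| < e /\ gk k < e) ->
  Omega f r C Q p.
Proof.
move=> H; have Hap := approx H.
have eC : edist p C = 0.
  apply/eqP; rewrite eq_le ed_ge0 // andbT.
  apply: (@le0_of_small _ _ (2 * n.+1%:R)) => // e e0.
  have e1 : 0 < Num.min e (blo * e ^+ 2) by rewrite lt_min e0 mulr_gt0 // exprn_gt0.
  have [k [h1 [h2 _]]] := Hap _ e1.
  move: h1 h2; rewrite !lt_min => /andP [h1 _] /andP [_ h2].
  have hz : enorm (zz k) <= e.
    apply: small_enorm; first exact: ltW.
    have := le_lt_trans (gk_z k) h2; rewrite ltr_pM2l // => /ltW //.
  apply: le_trans (ed_le p (projC k).1) _.
  apply: le_trans (enorm_le_mx _) _.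
  rewrite -mulrA mulrCA; apply: ler_wpM2l => //.
  apply: le_trans (ler_distD (x k) _ _) _.
  have := mxnorm_le (zz k); rewrite /zz => h3.
  lra.
have eQ : edist (Fvec f p) (Qplus Q) = 0.
  apply/eqP; rewrite eq_le (ed_ge0 _ (Qplus_n0 Q0)) andbT.
  apply: (@le0_of_small _ _ (2 * m.+1%:R)) => // e e0.
  have e1 : 0 < Num.min e (glo * e ^+ 2) by rewrite lt_min e0 mulr_gt0 // exprn_gt0.
  have [k [_ [h2 h3]]] := Hap _ e1.
  move: h2; rewrite !lt_min => /andP [_ h2].
  have hz : enorm (rho k) <= e.
    apply: small_enorm; first exact: ltW.
    have := le_lt_trans (gk_r k) h2; rewrite ltr_pM2l // => /ltW //.
  apply: le_trans (ed_le (Fvec f p) (projQ k).1) _.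
  apply: le_trans (enorm_le_mx _) _.
  rewrite -mulrA mulrCA; apply: ler_wpM2l => //.
  apply: le_trans (ler_distD (Fvec f (x k)) _ _) _.
  have := mxnorm_le (rho k); rewrite /rho => h4.
  have h5 : `|Fvec f p - Fvec f (x k)| <= e.
    rewrite [leLHS]/Num.Def.normr /= mx_normrE.
    apply: bigmax_le; first exact: ltW.
    move=> [a b] _ /=; rewrite !mxE.
    by apply: ltW; move: (h3 b); rewrite lt_min => /andP [].
  lra.
have Cp : C p by apply: Ccl; apply: edist0_closure C0 eC.
split; first by split; [apply: Hfun0' | apply: Gfun0'].
rewrite -A7; apply/eqP; rewrite eq_le; apply/andP; split.
  apply: phi_le => i.
  suff : term f r C i p - philb f r C <= 0 by lra.
  apply: (@le0_of_small _ _ (Rr + 1)); first by apply: addr_ge0 => //; apply: sumr_ge0.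
  move=> e e0.
  have e1 : 0 < Num.min e (alo * e) by rewrite lt_min e0 mulr_gt0.
  have [k [_ [h2 h3]]] := Hap _ e1.
  move: h2; rewrite !lt_min => /andP [_ h2].
  have hD : Dl k <= e.
    have := le_lt_trans (gk_D k) h2; rewrite ltr_pM2l // => /ltW //.
  have hph := phi_ge f r C (x k) i.
  have hf : r i * (f i p - f i (x k)) <= Rr * e.
    apply: le_trans (ler_norm _) _; rewrite normrM; apply: ler_pM => //.
      exact: r_le.
    by apply: ltW; move: (h3 i); rewrite lt_min => /andP [].
  have : term f r C i p = term f r C i (x k) + r i * (f i p - f i (x k)) by rewrite /term; ring.
  move: hD; rewrite /Dl; lra.
rewrite /philb; apply: ge_inf; last by exists p.
exists 0 => _ [y Cy <-].
apply: le_trans (phi_ge f r C y ord0); apply: mulr_ge0; first exact: ltW.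
rewrite subr_ge0; apply: ge_inf; [exact: flb | by exists y].
Qed.


Lemma conclusion : exists (kj : nat -> nat) (xinf : 'rV[R]_n.+1),
    (forall j, (kj j < kj j.+1)%N) /\ Omega f r C Q xinf /\
    (fun j => x (kj j)) @ \oo --> xinf.
Proof.
have ipos : forall j : nat, 0 < j.+1%:R^-1 :> R by move=> j; rewrite invr_gt0 ltr0Sn.
have [s1 [Hs1 Ps1]] := @extract (fun j k => gk k < j.+1%:R^-1) (fun j K => gk_small K (ipos j)).
have [p [Kp Hp]] := @seq_cluster R n.+1 (fun j => x (s1 j)) Kset Kcompact (fun j => xK (s1 j)).
have [s2 [Hs2 Ps2]] := @extract (fun j k => `|p - x (s1 k)| < j.+1%:R^-1) (fun j K => Hp _ K (ipos j)).
exists (fun j => s1 (s2 j)), p; split; first by move=> j; apply: incr_lt Hs1 _ _ (Hs2 j).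
split; last by apply: cvg_from_inv => j; exact: Ps2.
apply: omega_limit => e e0.
have [N HN] := inv_small e0.
exists (s1 (s2 N)); split; first exact: lt_trans (Ps2 N) (HN N (leqnn N)).
apply: lt_trans (Ps1 (s2 N)) _; apply: le_lt_trans _ (HN N (leqnn N)).
rewrite lef_pV2 ?posrE ?ltr0Sn // ler_nat ltnS; exact: incr_ge Hs2 N.
Qed.

End Main.

Unset Implicit Arguments.
Set Strict Implicit.
Theorem proposition6 (R : realType) (n m : nat)
  (f : 'I_m.+1 -> 'rV[R]_n.+1 -> R) (r : 'I_m.+1 -> R)
  (C : set 'rV[R]_n.+1) (Q : set 'rV[R]_m.+1) (mu : R)
  (alpha beta gamma lam : nat -> R)
  (alo ahi blo bhi glo ghi : R)
  (x : nat -> 'rV[R]_n.+1) (istar : nat -> 'I_m.+1)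
  (pQ : nat -> 'rV[R]_m.+1) (pC : nat -> 'rV[R]_n.+1) :
  (forall i, 0 < r i) -> \sum_(i < m.+1) r i = 1 ->
  0 < mu ->
  ABP_seq f r C Q mu alpha beta gamma lam x istar pQ pC ->
  (* (A1) *) (forall i, C1 (f i)) ->
  (* (A2) *) C !=set0 -> closed C -> convex_set C ->
             Q !=set0 -> closed Q -> convex_set Q ->
             (forall i, has_lbound [set f i y | y in C]) ->
  (* (A3) *) (forall i, convex_function setT (f i)) ->
  (* (A4) *) Omega f r C Q !=set0 ->
  (* (A5) *) (forall k, 0 < lam k) ->
             series lam @ \oo --> +oo ->
             cvgn (series (fun k => lam k ^+ 2)) ->
  (* (A6) *) 0 < alo -> (forall k, alo <= alpha k <= ahi) ->
             0 < blo -> (forall k, blo <= beta k <= bhi) ->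
             0 < glo -> (forall k, glo <= gamma k <= ghi) ->
  (* (A7) *) philb f r C = phistar f r C Q ->
  exists (kj : nat -> nat) (xinf : 'rV[R]_n.+1),
    (forall j, (kj j < kj j.+1)%N) /\
    Omega f r C Q xinf /\
    (fun j => x (kj j)) @ \oo --> xinf.
Proof.
move=> r0 _ mu0 Habp HC1 C0 Ccl Ccv Q0 _ Qcv flb fcv [xs Oxs] lam0 lamoo lam2
  alo0 Ha blo0 Hb glo0 Hg A7.
exact: (@conclusion R n m f r C Q mu alpha beta gamma lam alo ahi blo bhi glo ghi
  x istar pQ pC r0 mu0 Habp HC1 C0 Ccl Ccv Q0 Qcv flb fcv lam0 lamoo lam2
  alo0 Ha blo0 Hb glo0 Hg A7 xs Oxs).
Qed.
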